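(* Let $(R,\mathfrak{m})$ be a Noetherian local ring and let $I$ be an ideal of $R$. Let $x_1,\ldots,x_s,y$ be a minimal generating set of $I$ and $J=(x_1,\ldots,x_s)$. Then, for each integer $n\geq 2$, there is a short exact sequence of $R$-modules $$0\to \frac{H_1(x_1t,\ldots,x_st;\mathbf{R}(I))_n}{yt\,H_1(x_1t,\ldots,x_st;\mathbf{R}(I))_{n-1}}\longrightarrow H_1(x_1t,\ldots,x_st,yt;\mathbf{R}(I))_n\stackrel{\sigma_n}{\longrightarrow}\frac{JI^{n-1}:y^n}{JI^{n-2}:y^{n-1}}\to 0,$$ where $\sigma_n$ sends the homology class of a cycle $(w_1t^{n-1},\ldots,w_st^{n-1},w_{s+1}t^{n-1})$, $w_i\in I^{n-1}$, to the class of $a\in (JI^{n-1}:y^n)$, where $a\in R$ is such that $w_{s+1}=ay^{n-1}+b$ for some $b\in JI^{n-2}$.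
   Context: $\mathbf{R}(I)=\bigoplus_{n\geq0}I^nt^n$ is the Rees algebra; $I^0=R$. For elements $z_1,\ldots,z_m$ of degree one of a graded ring $U=\bigoplus_n U_n$ (here $U=\mathbf{R}(I)$), $H_1(z_1,\ldots,z_m;U)_n$ is the first homology of the graded Koszul complex in degree $n$: $\wedge_2(R^m)\otimes U_{n-2}\xrightarrow{\partial_2}\wedge_1(R^m)\otimes U_{n-1}\xrightarrow{\partial_1}U_n$, with $\partial_2(e_i\wedge e_j\otimes u)=e_j\otimes z_iu-e_i\otimes z_ju$ and $\partial_1(e_i\otimes v)=z_iv$, where $e_1,\ldots,e_m$ is the standard basis of $R^m$. Thus cycles in degree $n$ are $m$-tuples in $U_{n-1}^m$. *)

(* Defs.v *)
(* Ideals of a commutative ring are represented as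
   Prop-valued subsets R -> Prop; Koszul homology is described through
   explicit cycles and boundaries. *)
From HB Require Import structures.
From mathcomp Require Import all_boot all_order all_algebra.
Set Implicit Arguments. Unset Strict Implicit. Unset Printing Implicit Defensive.
Import GRing.Theory.
Local Open Scope ring_scope.

Section IdealDefs.
Variable R : comNzRingType.

Definition is_ideal (A : R -> Prop) : Prop :=
  [/\ A 0, (forall a b, A a -> A b -> A (a + b)) & (forall r a, A a -> A (r * a))].

Definition ideal_gen (m : nat) (g : 'I_m -> R) : R -> Prop :=
  fun r => exists c : 'I_m -> R, r = \sum_(i < m) c i * g i.

Definition idealM (A B : R -> Prop) : R -> Prop :=
  fun r => exists (k : nat) (a b : 'I_k -> R),
    [/\ forall i, A (a i), forall i, B (b i) & r = \sum_(i < k) a i * b i].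

Definition idealX (A : R -> Prop) (n : nat) : R -> Prop :=
  iter n (idealM A) (fun _ => True).

Definition colon (A : R -> Prop) (c : R) : R -> Prop := fun r => A (r * c).

Definition noetherian : Prop :=
  forall A : R -> Prop, is_ideal A ->
    exists (m : nat) (g : 'I_m -> R), forall r, A r <-> ideal_gen g r.

Definition local_ring : Prop :=
  exists M : R -> Prop, [/\ is_ideal M, ~ M 1 &
    forall A : R -> Prop, is_ideal A -> ~ A 1 -> forall r, A r -> M r].

Definition min_gens (m : nat) (g : 'I_m -> R) : Prop :=
  forall i : 'I_m, ~ (exists c : 'I_m -> R, g i = \sum_(j < m | j != i) c j * g j).

Definition extend (s : nat) (g : 'I_s -> R) (y : R) : 'I_s.+1 -> R :=
  fun i => match unlift ord_max i with Some j => g j | None => y end.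

(* Koszul complex of z_1 t, ..., z_m t on the Rees algebra R(I), degree n.
   A 1-chain in degree n is an m-tuple w with w_i t^(n-1), w_i in I^(n-1)
   (the component U_(n-1) is 0 when n = 0). *)
Definition kchain (m : nat) (I : R -> Prop) (n : nat) (w : 'I_m -> R) : Prop :=
  forall i, w i = 0 \/ ((1 <= n)%N /\ idealX I (n - 1) (w i)).

(* 1-cycles in degree n: kernel of d_1 (e_i (x) v |-> z_i v). *)
Definition kcycle (m : nat) (z : 'I_m -> R) (I : R -> Prop) (n : nat)
  (w : 'I_m -> R) : Prop :=
  kchain I n w /\ \sum_(i < m) z i * w i = 0.

(* 1-boundaries in degree n: image of d_2 applied to
   sum_(i,j) e_i /\ e_j (x) u_ij t^(n-2), with u_ij in I^(n-2)
   (U_(n-2) = 0 when n < 2);  d_2(e_i/\e_j (x) u) = e_j (x) z_i u - e_i (x) z_j u. *)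
Definition kbound (m : nat) (z : 'I_m -> R) (I : R -> Prop) (n : nat)
  (w : 'I_m -> R) : Prop :=
  exists u : 'I_m -> 'I_m -> R,
    (forall i j, u i j = 0 \/ ((2 <= n)%N /\ idealX I (n - 2) (u i j))) /\
    forall k, w k = \sum_(i < m) z i * u i k - \sum_(j < m) z j * u k j.

End IdealDefs.

(* Main.v *)
Require Import Defs.
From HB Require Import structures.
From mathcomp Require Import all_boot all_order all_algebra.
From mathcomp Require Import ring.
Set Implicit Arguments. Unset Strict Implicit. Unset Printing Implicit Defensive.
Import GRing.Theory.
Local Open Scope ring_scope.

Section Basic.
Variable R : comNzRingType.
Implicit Types A B : R -> Prop.

Lemma ideal0 A : is_ideal A -> A 0.
Proof. by case. Qed.
Lemma idealD A a b : is_ideal A -> A a -> A b -> A (a + b).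
Proof. by case=> _ H _; apply: H. Qed.
Lemma idealMl A r a : is_ideal A -> A a -> A (r * a).
Proof. by case=> _ _ H; apply: H. Qed.
Lemma idealMr A r a : is_ideal A -> A a -> A (a * r).
Proof. by move=> HA Ha; rewrite mulrC; apply: idealMl. Qed.
Lemma idealN A a : is_ideal A -> A a -> A (- a).
Proof. by move=> HA Ha; rewrite -mulN1r; apply: idealMl. Qed.
Lemma idealB A a b : is_ideal A -> A a -> A b -> A (a - b).
Proof. by move=> HA Ha Hb; apply: idealD => //; apply: idealN. Qed.
Lemma ideal_sum A k (F : 'I_k -> R) : is_ideal A -> (forall i, A (F i)) ->
  A (\sum_(i < k) F i).
Proof.
move=> HA HF; apply: (big_ind A) => //; first exact: ideal0.
by move=> a b; apply: idealD.
Qed.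

Lemma ideal_gen_ideal m (g : 'I_m -> R) : is_ideal (ideal_gen g).
Proof.
split.
- by exists (fun=> 0); rewrite big1 // => i _; rewrite mul0r.
- move=> a b [c ->] [d ->]; exists (fun i => c i + d i).
  by rewrite -big_split /=; apply: eq_bigr => i _; rewrite mulrDl.
- move=> r a [c ->]; exists (fun i => r * c i).
  by rewrite mulr_sumr; apply: eq_bigr => i _; rewrite mulrA.
Qed.

Lemma ideal_gen_mem m (g : 'I_m -> R) i : ideal_gen g (g i).
Proof.
exists (fun j => if j == i then 1 else 0).
rewrite (bigD1 i) //= eqxx mul1r big1 ?addr0 // => j /negbTE ->.
by rewrite mul0r.
Qed.

Lemma idealM_mul A B a b : A a -> B b -> idealM A B (a * b).
Proof.
move=> Ha Hb; exists 1%N, (fun=> a), (fun=> b); split => //.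
by rewrite big_ord1.
Qed.

Lemma idealM_ideal A B : is_ideal A -> is_ideal (idealM A B).
Proof.
move=> HA; split.
- by exists 0%N, (fun=> 0), (fun=> 0); split => [[]|[]|]; rewrite ?big_ord0.
- move=> r1 r2 [k1 [a1 [b1 [Ha1 Hb1 ->]]]] [k2 [a2 [b2 [Ha2 Hb2 ->]]]].
  exists (k1 + k2)%N, (fun i => match split i with inl j => a1 j | inr j => a2 j end),
    (fun i => match split i with inl j => b1 j | inr j => b2 j end).
  split.
  + by move=> i; case: (split i).
  + by move=> i; case: (split i).
  + rewrite big_split_ord /=; congr (_ + _); apply: eq_bigr => i _.
    * by rewrite -[lshift _ _]/(unsplit (inl i)) unsplitK.
    * by rewrite -[rshift _ _]/(unsplit (inr i)) unsplitK.
- move=> r t [k [a [b [Ha Hb ->]]]].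
  exists k, (fun i => r * a i), b; split => //.
  + by move=> i; apply: idealMl.
  + by rewrite mulr_sumr; apply: eq_bigr => i _; rewrite mulrA.
Qed.

Lemma idealX_ideal A k : is_ideal A -> is_ideal (idealX A k).
Proof.
move=> HA; case: k => [|k] /=; first by split.
exact: idealM_ideal.
Qed.

Lemma idealM_mulB A B B' c r : (forall b, B b -> B' (c * b)) ->
  idealM A B r -> idealM A B' (c * r).
Proof.
move=> HB [k [a [b [Ha Hb ->]]]]; exists k, a, (fun i => c * b i); split => //.
- by move=> i; apply: HB.
- by rewrite mulr_sumr; apply: eq_bigr => i _; ring.
Qed.

Lemma idealM_gen_dec s (x : 'I_s -> R) B r : is_ideal B ->
  idealM (ideal_gen x) B r ->
  exists c : 'I_s -> R, (forall i, B (c i)) /\ r = \sum_(i < s) x i * c i.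
Proof.
move=> HB [k [a [b [Ha Hb ->]]]].
pose Q := fun r : R => exists c : 'I_s -> R, (forall i, B (c i)) /\ r = \sum_(i < s) x i * c i.
have HQ : is_ideal Q.
  split.
  - exists (fun=> 0); split; first by move=> i; apply: ideal0.
    by rewrite big1 // => i _; rewrite mulr0.
  - move=> r1 r2 [c1 [Hc1 ->]] [c2 [Hc2 ->]]; exists (fun i => c1 i + c2 i); split.
    + by move=> i; apply: idealD.
    + by rewrite -big_split; apply: eq_bigr => i _; rewrite mulrDr.
  - move=> r1 r2 [c1 [Hc1 ->]]; exists (fun i => r1 * c1 i); split.
    + by move=> i; apply: idealMl.
    + by rewrite mulr_sumr; apply: eq_bigr => i _; ring.
apply: (ideal_sum (A := Q)) => // i.
have [e He] := Ha i.
exists (fun j => e j * b i); split.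
- by move=> j; apply: idealMl.
- by rewrite He mulr_suml; apply: eq_bigr => j _; ring.
Qed.
End Basic.

Section Ext.
Variable R : comNzRingType.

Lemma sumS s (F : 'I_s.+1 -> R) :
  \sum_(i < s.+1) F i = \sum_(i < s) F (lift ord_max i) + F ord_max.
Proof.
rewrite big_ord_recr; congr (_ + _); apply: eq_bigr => i _; congr F.
apply: val_inj => /=; rewrite /bump leqNgt ltn_ord. by [].
Qed.

Lemma extendL s (g : 'I_s -> R) c i : extend g c (lift ord_max i) = g i.
Proof. by rewrite /extend liftK. Qed.
Lemma extendM s (g : 'I_s -> R) c : extend g c ord_max = c.
Proof. by rewrite /extend unlift_none. Qed.
Lemma extend_case s (i : 'I_s.+1) : (exists j, i = lift ord_max j) \/ i = ord_max.
Proof. by case: (unliftP ord_max i) => [j ->|->]; [left; exists j | right]. Qed.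

Lemma sumz s (g : 'I_s -> R) c (F : 'I_s.+1 -> R) :
  \sum_(i < s.+1) extend g c i * F i = \sum_(i < s) g i * F (lift ord_max i) + c * F ord_max.
Proof.
rewrite sumS extendM; congr (_ + _); apply: eq_bigr => i _; by rewrite extendL.
Qed.

Definition ext2 s (u : 'I_s -> 'I_s -> R) (col row : 'I_s -> R) (c : R) :=
  fun i j : 'I_s.+1 => match unlift ord_max i with
    | Some a => extend (u a) (col a) j
    | None => extend row c j end.

Lemma ext2LL s u col row c (i j : 'I_s) : ext2 u col row c (lift ord_max i) (lift ord_max j) = u i j.
Proof. by rewrite /ext2 liftK extendL. Qed.
Lemma ext2LM s u col row c (i : 'I_s) : ext2 u col row c (lift ord_max i) ord_max = col i.
Proof. by rewrite /ext2 liftK extendM. Qed.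
Lemma ext2ML s u col row c (j : 'I_s) : ext2 u col row c ord_max (lift ord_max j) = row j.
Proof. by rewrite /ext2 unlift_none extendL. Qed.
Lemma ext2MM s u col row c : @ext2 s u col row c ord_max ord_max = c.
Proof. by rewrite /ext2 unlift_none extendM. Qed.

Lemma bnd_ext2L s (x : 'I_s -> R) y u col row c k :
  \sum_(i < s.+1) extend x y i * ext2 u col row c i (lift ord_max k)
  - \sum_(j < s.+1) extend x y j * ext2 u col row c (lift ord_max k) j
  = (\sum_(i < s) x i * u i k + y * row k) - (\sum_(j < s) x j * u k j + y * col k).
Proof.
rewrite !sumz ext2ML ext2LM.
by under eq_bigr => i _ do rewrite ext2LL; under [X in _ - (X + _)]eq_bigr => i _ do rewrite ext2LL.
Qed.

Lemma bnd_ext2M s (x : 'I_s -> R) y u col row c :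
  \sum_(i < s.+1) extend x y i * ext2 u col row c i ord_max
  - \sum_(j < s.+1) extend x y j * ext2 u col row c ord_max j
  = (\sum_(i < s) x i * col i + y * c) - (\sum_(j < s) x j * row j + y * c).
Proof.
rewrite !sumz ext2MM.
by under eq_bigr => i _ do rewrite ext2LM; under [X in _ - (X + _)]eq_bigr => i _ do rewrite ext2ML.
Qed.

End Ext.

Section Main.
Variables (R : comNzRingType) (s : nat) (x : 'I_s -> R) (y : R).
Local Notation z := (extend x y).
Local Notation I := (ideal_gen (extend x y)).
Local Notation J := (ideal_gen x).
Local Notation JI k := (idealM (ideal_gen x) (idealX (ideal_gen (extend x y)) k)).

Lemma I_ideal : is_ideal I. Proof. exact: ideal_gen_ideal. Qed.
Lemma J_ideal : is_ideal J. Proof. exact: ideal_gen_ideal. Qed.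
Lemma IX_ideal m : is_ideal (idealX I m). Proof. exact/idealX_ideal/I_ideal. Qed.
Lemma JI_ideal m : is_ideal (JI m). Proof. exact/idealM_ideal/J_ideal. Qed.

Lemma y_mem : I y.
Proof. by have := ideal_gen_mem (extend x y) ord_max; rewrite extendM. Qed.
Lemma xI_mem i : I (x i).
Proof. by have := ideal_gen_mem (extend x y) (lift ord_max i); rewrite extendL. Qed.
Lemma xJ_mem i : J (x i).
Proof. exact: ideal_gen_mem. Qed.

Lemma I_dec r : I r -> exists a b, J b /\ r = a * y + b.
Proof.
case=> c ->; rewrite sumS extendM.
exists (c ord_max), (\sum_(i < s) c (lift ord_max i) * x i); split.
- by exists (fun i => c (lift ord_max i)).
- rewrite addrC; congr (_ + _); apply: eq_bigr => i _; by rewrite extendL.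
Qed.

Lemma yX_mem m : idealX I m (y ^+ m).
Proof.
elim: m => [|m IH] //=; rewrite exprS; exact: idealM_mul y_mem IH.
Qed.

Lemma JI_mulI m p r : I p -> JI m r -> JI m.+1 (p * r).
Proof. by move=> Hp; apply: idealM_mulB => b Hb; apply: idealM_mul. Qed.

Lemma JI_xmem m i r : idealX I m r -> JI m (x i * r).
Proof. by move=> Hr; apply: idealM_mul => //; apply: xJ_mem. Qed.

Lemma dec m r : idealX I m.+1 r -> exists a b, JI m b /\ r = a * y ^+ m.+1 + b.
Proof.
pose D m r := exists a b, JI m b /\ r = a * y ^+ m.+1 + b.
have HD : forall m, is_ideal (D m).
  move=> k; split.
  - exists 0, 0; split; first exact: ideal0 (JI_ideal k).
    by rewrite mul0r addr0.
  - move=> r1 r2 [a1 [b1 [Hb1 ->]]] [a2 [b2 [Hb2 ->]]].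
    exists (a1 + a2), (b1 + b2); split; first exact: idealD (JI_ideal k) Hb1 Hb2.
    by ring.
  - move=> r1 r2 [a1 [b1 [Hb1 ->]]].
    exists (r1 * a1), (r1 * b1); split; first exact: idealMl (JI_ideal k) Hb1.
    by ring.
move=> Hr; suff : D m r by []; move: r Hr.
elim: m => [|m IH] r /= [k [p [q [Hp Hq ->]]]];
  apply: (ideal_sum (A := D _)) => // i; have [al [be [Hbe Hpe]]] := I_dec (Hp i).
- exists (al * q i), (be * q i); split; first exact: idealM_mul.
  by rewrite Hpe; ring.
- have [a [b [Hb Hqe]]] := IH _ (Hq i).
  exists (al * a), (be * (a * y ^+ m.+1) + p i * b); split.
  + apply: idealD (JI_ideal _) _ _; last exact: JI_mulI.
    apply: idealM_mul => //; apply: idealMl (IX_ideal _) _; exact: yX_mem.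
  + by rewrite Hqe Hpe [y ^+ m.+2]exprS; ring.
Qed.

Lemma kchain_mem n m (w : 'I_n -> R) : kchain I m.+1 w -> forall i, idealX I m (w i).
Proof. move=> H i; case: (H i) => [->|[_]]; [exact: (ideal0 (IX_ideal m)) | by rewrite subn1]. Qed.

Lemma kchain_intro n m (w : 'I_n -> R) : (forall i, idealX I m (w i)) -> kchain I m.+1 w.
Proof. by move=> H i; right; split => //; rewrite subn1. Qed.


Lemma sum_x0 : \sum_(i < s) x i * 0 = 0.
Proof. by rewrite big1 // => i _; rewrite mulr0. Qed.

Definition sg m (w : 'I_s.+1 -> R) a :=
  exists b, JI m b /\ w ord_max = a * y ^+ m.+1 + b.

Lemma P_C0 m a : JI m (a * y ^+ m.+1) -> JI m.+1 (a * y ^+ m.+2).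
Proof.
move=> H; have -> : a * y ^+ m.+2 = y * (a * y ^+ m.+1) by rewrite [y ^+ m.+2]exprS; ring.
exact: JI_mulI y_mem H.
Qed.

Lemma P_def m w : kcycle z I m.+2 w -> exists a, sg m w a.
Proof.
case=> Hch _; have [a [b [Hb E]]] := dec (kchain_mem Hch ord_max).
by exists a, b.
Qed.

Lemma cyc_last m w : kcycle z I m w ->
  y * w ord_max = - \sum_(i < s) x i * w (lift ord_max i).
Proof.
case=> _; rewrite sumz => /eqP; rewrite addr_eq0 => /eqP ->; by rewrite opprK.
Qed.

Lemma JI_sumx m (c : 'I_s -> R) : (forall i, idealX I m (c i)) ->
  JI m (\sum_(i < s) x i * c i).
Proof. by move=> H; apply: ideal_sum (JI_ideal m) _ => i; apply: JI_xmem. Qed.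

Lemma P_C1 m w a : kcycle z I m.+2 w -> sg m w a -> JI m.+1 (a * y ^+ m.+2).
Proof.
move=> Hc [b [Hb E]].
have -> : a * y ^+ m.+2 = y * w ord_max - y * b by rewrite E [y ^+ m.+2]exprS; ring.
rewrite (cyc_last Hc).
apply: idealB (JI_ideal _) _ _; last exact: JI_mulI y_mem Hb.
apply: idealN (JI_ideal _) _; apply: JI_sumx => i.
exact: kchain_mem (proj1 Hc) _.
Qed.

Lemma ucond_mem m (u : 'I_s.+1 -> 'I_s.+1 -> R) i j :
  (u i j = 0 \/ ((2 <= m.+2)%N /\ idealX I (m.+2 - 2) (u i j))) -> idealX I m (u i j).
Proof. by case=> [->|[_]]; [exact: (ideal0 (IX_ideal m)) | rewrite subn2]. Qed.

Lemma ucond_memx m (u : 'I_s -> 'I_s -> R) i j :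
  (u i j = 0 \/ ((2 <= m.+2)%N /\ idealX I (m.+2 - 2) (u i j))) -> idealX I m (u i j).
Proof. by case=> [->|[_]]; [exact: (ideal0 (IX_ideal m)) | rewrite subn2]. Qed.

Lemma P_wd m w w' a a' : kcycle z I m.+2 w -> kcycle z I m.+2 w' ->
  kbound z I m.+2 (fun k => w k - w' k) -> sg m w a -> sg m w' a' ->
  JI m ((a - a') * y ^+ m.+1).
Proof.
move=> _ _ [u [Hu Hk]] [b [Hb E]] [b' [Hb' E']].
have -> : (a - a') * y ^+ m.+1 = (w ord_max - w' ord_max) - b + b'
  by rewrite E E'; ring.
rewrite Hk !sumz.
have -> : forall S1 S2 t : R, S1 + y * t - (S2 + y * t) = S1 - S2 by move=> *; ring.
apply: idealD (JI_ideal _) _ _ => //; apply: idealB (JI_ideal _) _ _ => //.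
apply: idealB (JI_ideal _) _ _; apply: JI_sumx => i; exact: ucond_mem.
Qed.

Lemma P_lin m r w w' a a' : sg m w a -> sg m w' a' ->
  sg m (fun k => r * w k + w' k) (r * a + a').
Proof.
move=> [b [Hb E]] [b' [Hb' E']]; exists (r * b + b'); split.
- by apply: idealD (JI_ideal _) _ _ => //; apply: idealMl (JI_ideal _) _.
- by rewrite /= E E'; ring.
Qed.

Lemma P_surj m a : JI m.+1 (a * y ^+ m.+2) -> exists w, kcycle z I m.+2 w /\ sg m w a.
Proof.
move=> H; have [c [Hc E]] := idealM_gen_dec (IX_ideal m.+1) H.
exists (extend (fun i => - c i) (a * y ^+ m.+1)); split; [split|].
- apply: kchain_intro => i; case: (extend_case i) => [[j ->]|->].
  + by rewrite extendL; apply: idealN (IX_ideal _) _.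
  + by rewrite extendM; apply: idealMl (IX_ideal _) _; apply: yX_mem.
- rewrite sumz extendM.
  have -> : y * (a * y ^+ m.+1) = a * y ^+ m.+2 by rewrite [y ^+ m.+2]exprS; ring.
  rewrite E -big_split /= big1 // => i _; rewrite extendL; ring.
- exists 0; split; first exact: ideal0 (JI_ideal _).
  by rewrite extendM addr0.
Qed.

Lemma P_ext m v : kcycle x I m.+2 v -> kcycle z I m.+2 (extend v 0) /\ sg m (extend v 0) 0.
Proof.
case=> Hch Hs; split; [split|].
- move=> i; case: (extend_case i) => [[j ->]|->].
  + by rewrite extendL; apply: Hch.
  + by rewrite extendM; left.
- rewrite sumz extendM mulr0 addr0 -[RHS]Hs; apply: eq_bigr => i _.
  by rewrite extendL.
- exists 0; split; first exact: ideal0 (JI_ideal _).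
  by rewrite extendM mul0r addr0.
Qed.

Lemma P_exact m w a : kcycle z I m.+2 w -> sg m w a -> JI m (a * y ^+ m.+1) ->
  exists v, kcycle x I m.+2 v /\ kbound z I m.+2 (fun k => w k - extend v 0 k).
Proof.
move=> Hc [b [Hb E]] Ha.
have Hl : JI m (w ord_max) by rewrite E; apply: idealD (JI_ideal _) _ _.
have [d [Hd Ed]] := idealM_gen_dec (IX_ideal m) Hl.
exists (fun k => w (lift ord_max k) + y * d k); split; [split|].
- apply: kchain_intro => i; apply: idealD (IX_ideal _) _ _.
  + exact: kchain_mem (proj1 Hc) _.
  + exact: idealM_mul y_mem (Hd i).
- have := cyc_last Hc; rewrite Ed mulr_sumr => /eqP; rewrite -addr_eq0 -big_split /=.
  move=> /eqP H0; rewrite -[RHS]H0; apply: eq_bigr => i _; ring.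
- exists (ext2 (fun _ _ => 0) d (fun _ => 0) 0); split.
  + move=> i j; case: (extend_case i) => [[i' ->]|->]; case: (extend_case j) => [[j' ->]|->];
      rewrite ?ext2LL ?ext2LM ?ext2ML ?ext2MM; try by left.
    by right; split => //; rewrite subn2.
  + move=> k; case: (extend_case k) => [[k' ->]|->].
    * rewrite bnd_ext2L extendL !sum_x0; ring.
    * rewrite bnd_ext2M extendM Ed !sum_x0; ring.
Qed.

Lemma P_ker m v : kcycle x I m.+2 v ->
  (kbound z I m.+2 (extend v 0) <->
   exists v', kcycle x I m.+1 v' /\ kbound x I m.+2 (fun k => v k - y * v' k)).
Proof.
case=> Hch Hs; split.
- case=> U [HU Hk].
  exists (fun k => U ord_max (lift ord_max k) - U (lift ord_max k) ord_max); split; [split|].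
  + apply: kchain_intro => i; apply: idealB (IX_ideal _) _ _; exact: ucond_mem.
  + have := Hk ord_max; rewrite extendM !sumz => /esym /eqP.
    rewrite subr_eq0 => /eqP E.
    have : \sum_(i < s) x i * U (lift ord_max i) ord_max = \sum_(j < s) x j * U ord_max (lift ord_max j)
      by move: E; rewrite addrC [X in _ = X]addrC => /addrI.
    move=> E2; rewrite (eq_bigr (fun i => x i * U ord_max (lift ord_max i) - x i * U (lift ord_max i) ord_max));
      last by move=> i _; ring.
    by rewrite sumrB E2 subrr.
  + exists (fun a b => U (lift ord_max a) (lift ord_max b)); split.
    * move=> i j; case: (HU (lift ord_max i) (lift ord_max j)) => [->|]; [by left | by right].
    * move=> k; have := Hk (lift ord_max k); rewrite extendL !sumz => ->; ring.
- case=> v' [[Hch' Hs'] [u [Hu Hk]]].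
  exists (ext2 u (fun a => - v' a) (fun _ => 0) 0); split.
  + move=> i j; case: (extend_case i) => [[i' ->]|->]; case: (extend_case j) => [[j' ->]|->];
      rewrite ?ext2LL ?ext2LM ?ext2ML ?ext2MM; try by left.
    * exact: Hu.
    * case: (Hch' i') => [->|[_ H]]; first by left; rewrite oppr0.
      by right; split => //; rewrite subn2; apply: idealN (IX_ideal _) _; rewrite subn1 in H.
  + move=> k; case: (extend_case k) => [[k' ->]|->].
    * rewrite bnd_ext2L extendL.
      have -> : v k' = (v k' - y * v' k') + y * v' k' by ring.
      rewrite Hk; ring.
    * rewrite bnd_ext2M extendM.
      rewrite (eq_bigr (fun i => - (x i * v' i))); last by move=> i _; ring.
      rewrite sumrN Hs' sum_x0; ring.
Qed.

End Main.

Theorem lemma3p1 (R : comNzRingType) (s : nat) (x : 'I_s -> R) (y : R) (n : nat) :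
  noetherian R -> local_ring R -> min_gens (extend x y) -> (2 <= n)%N ->
  let z := extend x y in
  let I := ideal_gen z in
  let J := ideal_gen x in
  (* target module  (J I^(n-1) : y^n) / (J I^(n-2) : y^(n-1)) *)
  let C1 := colon (idealM J (idealX I (n - 1))) (y ^+ n) in
  let C0 := colon (idealM J (idealX I (n - 2))) (y ^+ (n - 1)) in
  (* sig w a : w_(s+1) = a y^(n-1) + b with b in J I^(n-2) *)
  let sig := fun (w : 'I_s.+1 -> R) (a : R) =>
    exists b, idealM J (idealX I (n - 2)) b /\ w ord_max = a * y ^+ (n - 1) + b in
  [/\ (* the quotient makes sense *)
      forall a, C0 a -> C1 a,
    [/\
      (* sigma_n is defined on every cycle, with values in C1 *)
      forall w, kcycle z I n w -> exists a, sig w a,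
      forall w a, kcycle z I n w -> sig w a -> C1 a,
      (* sigma_n is well defined on homology classes (independent of choices) *)
      forall w w' a a', kcycle z I n w -> kcycle z I n w' ->
        kbound z I n (fun k => w k - w' k) -> sig w a -> sig w' a' -> C0 (a - a'),
      (* sigma_n is R-linear *)
      forall r w w' a a', sig w a -> sig w' a' ->
        sig (fun k => r * w k + w' k) (r * a + a') &
      (* sigma_n is surjective *)
      forall a, C1 a -> exists w, kcycle z I n w /\ sig w a] &
      [/\ (* the natural map H_1(xt;R(I))_n -> H_1(xt,yt;R(I))_n, [v] |-> [(v,0)],
             lands in ker sigma_n ... *)
          forall v, kcycle x I n v -> kcycle z I n (extend v 0) /\ sig (extend v 0) 0,
          (* ... whose image is all of ker sigma_n (exactness in the middle) ... *)
          forall w a, kcycle z I n w -> sig w a -> C0 a ->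
            exists v, kcycle x I n v /\ kbound z I n (fun k => w k - extend v 0 k) &
          (* ... and whose kernel is exactly yt H_1(xt;R(I))_(n-1), so that the
             induced map from the quotient is well defined and injective *)
          forall v, kcycle x I n v ->
            (kbound z I n (extend v 0) <->
             exists v', kcycle x I (n - 1) v' /\ kbound x I n (fun k => v k - y * v' k))]].
Proof.
move=> _ _ _; case: n => [|[|m]] // _ z I J C1 C0 sig.
have e1 : (m.+2 - 1 = m.+1)%N by []. have e2 : (m.+2 - 2 = m)%N by rewrite subn2.
rewrite /sig /C0 /C1 /I /J /z e1 e2.
split; [|split|split].
- exact: P_C0.
- exact: P_def.
- exact: P_C1.
- exact: P_wd.
- exact: P_lin.
- exact: P_surj.
- exact: P_ext.
- exact: P_exact.
- exact: P_ker.
Qed.
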